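(* Let $T$ be a reflection factorization in $G(4,2,2)$ of length $\ell\ge 3$ which contains at least one reflection from each of the conjugacy classes $S_1,S_2,S_3$. Then for any reflection $x$ in $G(4,2,2)$, there is a factorization in the Hurwitz orbit of $T$ whose right-most entry is $x$.
   Context: $G(4,2,2)$ is the group of the sixteen $2\times 2$ complex monomial matrices whose nonzero entries lie in $\{\pm1,\pm i\}$ and whose two nonzero entries multiply to $\pm 1$. A reflection is a matrix whose fixed space in $\mathbb{C}^2$ has dimension $1$. $G(4,2,2)$ contains six reflections, all of order $2$, which split into three conjugacy classes $S_1,S_2,S_3$ of $G(4,2,2)$, each of size $2$. A reflection factorization of length $\ell$ is a tuple $(r_1,\dots,r_\ell)$ of reflections in $G(4,2,2)$. The Hurwitz move $\sigma_i$ sends $(r_1,\dots,r_\ell)$ to $(r_1,\dots,r_{i-1},r_{i+1},r_{i+1}^{-1}r_ir_{i+1},r_{i+2},\dots,r_\ell)$; the Hurwitz orbit of $T$ is the set of factorizations obtained from $T$ by finite sequences of Hurwitz moves. *)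

(* Defs.v *)
From HB Require Import structures.
From mathcomp Require Import all_boot all_order all_algebra all_field.
Set Implicit Arguments. Unset Strict Implicit. Unset Printing Implicit Defensive.
Import Order.TTheory GRing.Theory Num.Theory.
Local Open Scope ring_scope.

Notation mat2 := 'M[algC]_2.

Definition unit4 (z : algC) : bool :=
  [|| z == 1, z == -1, z == 'i | z == - 'i].

Definition inG422 (A : mat2) : bool :=
  [&& A 0 1 == 0, A 1 0 == 0, unit4 (A 0 0), unit4 (A 1 1)
    & (A 0 0 * A 1 1 == 1) || (A 0 0 * A 1 1 == -1)]
  || [&& A 0 0 == 0, A 1 1 == 0, unit4 (A 0 1), unit4 (A 1 0)
    & (A 0 1 * A 1 0 == 1) || (A 0 1 * A 1 0 == -1)].

Definition is_reflection (A : mat2) : bool :=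
  inG422 A && (\rank (eigenspace A 1) == 1)%N.

Definition conjG422 (A B : mat2) : Prop :=
  exists2 g : mat2, inG422 g & B = g^-1 * A * g.

(* Hurwitz move sigma_(i+1) (0-indexed position i): replaces the entries
   r_i, r_(i+1) by r_(i+1), r_(i+1)^-1 r_i r_(i+1). *)
Definition hurwitz_move (i : nat) (s : seq mat2) : seq mat2 :=
  take i s ++ [:: nth 0 s i.+1; (nth 0 s i.+1)^-1 * nth 0 s i * nth 0 s i.+1]
    ++ drop i.+2 s.

Inductive hurwitz_reach (s : seq mat2) : seq mat2 -> Prop :=
  | hr_refl : hurwitz_reach s s
  | hr_step t i : hurwitz_reach s t -> (i.+1 < size t)%N ->
      hurwitz_reach s (hurwitz_move i t).

(* Main.v *)
Require Import Defs.
From HB Require Import structures.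
From mathcomp Require Import all_boot all_order all_algebra all_field.
From mathcomp Require Import ring.
Set Implicit Arguments. Unset Strict Implicit. Unset Printing Implicit Defensive.
Import Order.TTheory GRing.Theory Num.Theory.
Local Open Scope ring_scope.

Definition M (a b c d : algC) : 'M[algC]_2 :=
  \matrix_(i < 2, j < 2) if i == 0 then (if j == 0 then a else b) else (if j == 0 then c else d).

Lemma ord2P (i : 'I_2) : i = 0 \/ i = 1.
Proof. case: i => [[|[|//]] H]; [left|right]; exact: val_inj. Qed.

Lemma ME a b c d : [/\ M a b c d 0 0 = a, M a b c d 0 1 = b, M a b c d 1 0 = c & M a b c d 1 1 = d].
Proof. by rewrite !mxE. Qed.

Lemma M00 a b c d : M a b c d 0 0 = a. Proof. by case: (ME a b c d). Qed.
Lemma M01 a b c d : M a b c d 0 1 = b. Proof. by case: (ME a b c d). Qed.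
Lemma M10 a b c d : M a b c d 1 0 = c. Proof. by case: (ME a b c d). Qed.
Lemma M11 a b c d : M a b c d 1 1 = d. Proof. by case: (ME a b c d). Qed.

Lemma matE (A : 'M[algC]_2) : A = M (A 0 0) (A 0 1) (A 1 0) (A 1 1).
Proof. apply/matrixP=> i j; rewrite mxE; by case: (ord2P i) => ->; case: (ord2P j) => ->. Qed.

Lemma M_inj a b c d a' b' c' d' : M a b c d = M a' b' c' d' -> [/\ a = a', b = b', c = c' & d = d'].
Proof. move=> H; have := ME a b c d; rewrite H; case: (ME a' b' c' d') => -> -> -> ->; by case. Qed.

Lemma mulM a b c d e f g h : M a b c d * M e f g h = M (a*e+b*g) (a*f+b*h) (c*e+d*g) (c*f+d*h).
Proof.
rewrite -mulmxE; apply/matrixP=> i j; rewrite !mxE !big_ord_recl big_ord0 !mxE.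
by case: (ord2P i) => ->; case: (ord2P j) => ->; rewrite /= ?addr0. Qed.

Lemma oneM : 1 = M 1 0 0 1 :> 'M[algC]_2.
Proof. apply/matrixP=> i j; rewrite !mxE; by case: (ord2P i) => ->; case: (ord2P j) => ->. Qed.

Lemma oppM a b c d : - M a b c d = M (-a) (-b) (-c) (-d).
Proof. apply/matrixP=> i j; rewrite !mxE; by case: (ord2P i) => ->; case: (ord2P j) => ->. Qed.

Lemma addM a b c d e f g h : M a b c d + M e f g h = M (a+e) (b+f) (c+g) (d+h).
Proof. apply/matrixP=> i j; rewrite !mxE; by case: (ord2P i) => ->; case: (ord2P j) => ->. Qed.

Lemma zeroM : 0 = M 0 0 0 0 :> 'M[algC]_2.
Proof. apply/matrixP=> i j; rewrite !mxE; by case: (ord2P i) => ->; case: (ord2P j) => ->. Qed.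

Definition sg (e : bool) : algC := if e then -1 else 1.
Definition refl (c : nat) (e : bool) : 'M[algC]_2 :=
  match c with
  | 0 => M (sg e) 0 0 (- sg e)
  | 1 => M 0 (sg e) (sg e) 0
  | _ => M 0 (sg e * 'i) (- (sg e * 'i)) 0
  end.

Ltac simpC := rewrite /sg ?(mulrN, mulNr, mul1r, mulr1, mul0r, mulr0, addr0, add0r, opprK, oppr0, mulCii, subrr).

Lemma refl_sq c e : (c < 3)%N -> refl c e * refl c e = 1.
Proof.
rewrite oneM; case: c => [|[|[|//]]] _ /=; rewrite mulM; case: e; simpC => //.
Qed.

Lemma refl_conj c e c' e' : (c < 3)%N -> (c' < 3)%N ->
  refl c' e' * refl c e * refl c' e' = if c == c' then refl c e else refl c (~~ e).
Proof.
case: c => [|[|[|//]]] _; case: c' => [|[|[|//]]] _ /=; rewrite !mulM; case: e; case: e'; simpC => //.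
Qed.

Definition cls (A : 'M[algC]_2) := A 0 1 ^+ 2.

Lemma cls_refl c e : (c < 3)%N -> cls (refl c e) = [:: 0; 1; -1]`_c.
Proof.
by rewrite /cls; case: c => [|[|[|//]]] _ /=; case: e; rewrite /= M01 ?expr2; simpC.
Qed.

Lemma cls_refl10 c e : (c < 3)%N -> (refl c e 1 0) ^+ 2 = cls (refl c e).
Proof.
by rewrite /cls; case: c => [|[|[|//]]] _ /=; case: e; rewrite /= M01 M10 ?expr2; simpC.
Qed.

Lemma refl_neg c e : refl c (~~ e) = - refl c e.
Proof. by case: c => [|[|c]] /=; rewrite oppM; case: e; simpC. Qed.

Lemma cls_inj c c' : (c < 3)%N -> (c' < 3)%N ->
  [:: 0; 1; -1]`_c = [:: 0; 1; -1]`_c' :> algC -> c = c'.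
Proof.
have h1 : (1 : algC) <> -1.
  move/eqP; rewrite -subr_eq0 opprK. by rewrite (_ : 1 + 1 = 2%:R) // pnatr_eq0.
have h2 : (-1 : algC) <> 0 by move/eqP; rewrite oppr_eq0 oner_eq0.
have h3 : (1 : algC) <> 0 by move/eqP; rewrite oner_eq0.
case: c => [|[|[|//]]] _; case: c' => [|[|[|//]]] _ //= H.
all: first [ by move: (h1 H) | by move: (h1 (esym H)) | by move: (h2 H) | by move: (h2 (esym H))
  | by move: (h3 H) | by move: (h3 (esym H)) ].
Qed.

Lemma unit4_sq a : unit4 a -> (a ^+ 2 = 1 \/ a ^+ 2 = -1).
Proof. by case/or4P => /eqP ->; rewrite ?sqrrN ?expr1n ?sqrCi; auto. Qed.

Lemma unit4_neq0 a : unit4 a -> a != 0.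
Proof.
by case/or4P => /eqP ->; rewrite ?oppr_eq0 ?oner_eq0 ?neq0Ci.
Qed.

Lemma sq_eq a d : unit4 a -> (a * d == 1) || (a * d == -1) -> d ^+ 2 = a ^+ 2.
Proof.
move=> ua hp.
have h : a ^+ 2 * d ^+ 2 = 1.
  by rewrite -exprMn; case/orP: hp => /eqP ->; rewrite ?sqrrN expr1n.
case: (unit4_sq ua) => ha; rewrite ha in h *.
  by rewrite mul1r in h.
by rewrite mulN1r in h; rewrite -h opprK.
Qed.

Lemma conj_cls c e c' e' : (c < 3)%N -> (c' < 3)%N ->
  conjG422 (refl c e) (refl c' e') -> c = c'.
Proof.
move=> hc hc' [g Hg Hs].
move: Hs; set r := refl c e; set s := refl c' e' => Hs.
suff: cls r = cls s by rewrite /r /s !cls_refl //; apply: cls_inj.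
have key : g \is a GRing.unit -> g * s = r * g.
  by move=> u; rewrite Hs !mulrA mulrV // mul1r.
case/orP: Hg => /and5P [/eqP h01 /eqP h10 ua ud hp].
- set a := g 0 0 in ua hp; set d := g 1 1 in ud hp.
  have gE : g = M a 0 0 d by rewrite {1}(matE g) h01 h10.
  have a0 := unit4_neq0 ua; have d0 := unit4_neq0 ud.
  have u : g \is a GRing.unit.
    apply/unitrP; exists (M a^-1 0 0 d^-1).
    by rewrite gE !mulM oneM; simpC; rewrite !mulVf ?mulfV.
  have := key u; rewrite gE (matE s) (matE r) !mulM; simpC; case/M_inj => _ h _ _.
  have : (a * s 0 1) ^+ 2 = (r 0 1 * d) ^+ 2 by rewrite h.
  rewrite !exprMn (sq_eq ua hp) [RHS]mulrC /cls => /(mulfI (expf_neq0 2 a0)).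
  by rewrite !M01 => ->.
- set a := g 0 1 in ua hp; set d := g 1 0 in ud hp.
  have gE : g = M 0 a d 0 by rewrite {1}(matE g) h01 h10.
  have a0 := unit4_neq0 ua; have d0 := unit4_neq0 ud.
  have u : g \is a GRing.unit.
    apply/unitrP; exists (M 0 d^-1 a^-1 0).
    by rewrite gE !mulM oneM; simpC; rewrite !mulVf ?mulfV.
  have := key u; rewrite gE (matE s) (matE r) !mulM; simpC; case/M_inj => h _ _ _.
  have : (a * s 1 0) ^+ 2 = (r 0 1 * d) ^+ 2 by rewrite h.
  rewrite !exprMn (sq_eq ua hp) [RHS]mulrC /s cls_refl10 // -/s /cls => /(mulfI (expf_neq0 2 a0)).
  by rewrite !M01 => ->.
Qed.

Lemma rank1P (B : 'M[algC]_2) : (\rank B == 1)%N = (B != 0) && ~~ (B \is a GRing.unit).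
Proof.
have := rank_leq_row B.
case E: (\rank B) => [|[|[|//]]] _.
- by move/eqP: E; rewrite mxrank_eq0 => /eqP ->; rewrite eqxx.
- rewrite -mxrank_eq0 E /=; apply/esym/negP => /mxrank_unit; by rewrite E.
- have : row_free B by rewrite /row_free E.
  by rewrite row_free_unit => ->; rewrite andbF.
Qed.

Lemma eig_rank (A : 'M[algC]_2) : (\rank (eigenspace A 1) == 1)%N = (A - 1 != 0) && ~~ ((A - 1) \is a GRing.unit).
Proof.
rewrite /eigenspace mxrank_ker -rank1P.
by have := rank_leq_row (A - 1%:M); case: (\rank (A - 1%:M)) => [|[|[|//]]].
Qed.

Lemma subM1 a b c d : M a b c d - 1 = M (a - 1) b c (d - 1).
Proof. by rewrite oneM oppM addM; simpC. Qed.

Lemma refl_isR A : is_reflection A -> exists c e, (c < 3)%N /\ A = refl c e.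
Proof.
case/andP => HA; rewrite eig_rank => /andP [nz nu].
case/orP: HA => /and5P [/eqP h01 /eqP h10 ua ud hp].
- set a := A 0 0 in ua hp; set d := A 1 1 in ud hp.
  have AE : A = M a 0 0 d by rewrite {1}(matE A) h01 h10.
  rewrite AE subM1 in nz nu.
  have : (a - 1 == 0) || (d - 1 == 0).
    apply: contraR nu; rewrite negb_or => /andP [h1 h2].
    apply/unitrP; exists (M (a - 1)^-1 0 0 (d - 1)^-1).
    by rewrite !mulM oneM; simpC; rewrite !mulVf ?mulfV.
  case/orP; rewrite subr_eq0 => /eqP e1.
  + move: hp nz; rewrite e1 mul1r subrr => /orP [/eqP e2|/eqP e2].
      by rewrite e2 subrr zeroM eqxx.
    by move=> _; exists 0%N, false; rewrite AE e1 e2.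
  + move: hp nz; rewrite e1 mulr1 subrr => /orP [/eqP e2|/eqP e2].
      by rewrite e2 subrr zeroM eqxx.
    by move=> _; exists 0%N, true; rewrite AE e1 e2 /= /sg opprK.
- set b := A 0 1 in ua hp; set d := A 1 0 in ud hp.
  have AE : A = M 0 b d 0 by rewrite {1}(matE A) h01 h10.
  rewrite AE subM1 in nz nu.
  have bd : b * d = 1.
    apply/eqP; apply: contraR nu => h.
    have h' : 1 - b * d != 0 by rewrite subr_eq0 eq_sym.
    apply/unitrP; exists (M (- (1 - b * d)^-1) (- (b / (1 - b * d))) (- (d / (1 - b * d))) (- (1 - b * d)^-1)).
    rewrite !mulM oneM; split; congr M; field; done.
  case/or4P: ua => /eqP eb; rewrite eb in bd.
  + by rewrite mul1r in bd; exists 1%N, false; rewrite AE eb bd.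
  + by rewrite mulN1r in bd; exists 1%N, true; rewrite AE eb /= /sg -[d]opprK bd.
  + exists 2%N, false; split => //; rewrite AE eb /= /sg mul1r; congr M.
    by rewrite -[d]mul1r -[1]opprK -mulCii mulNr -mulrA bd mulr1.
  + exists 2%N, true; split => //; rewrite AE eb /= /sg mulN1r opprK; congr M.
    by rewrite -[d]mul1r -[1]opprK -mulCii -mulrN -mulrA bd mulr1.
Qed.

Lemma notunit_of (B v : 'M[algC]_2) : B * v = 0 -> v != 0 -> ~~ (B \is a GRing.unit).
Proof. move=> Bv; apply: contra => u; by rewrite -(mulKr u v) Bv mulr0. Qed.

Lemma M_neq0 a b c d : d != 0 -> M a b c d != 0.
Proof. by apply: contra => /eqP; rewrite zeroM => /M_inj [_ _ _ ->]. Qed.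

Lemma M_neq0' a b c d : b != 0 -> M a b c d != 0.
Proof. by apply: contra => /eqP; rewrite zeroM => /M_inj [_ -> _ _]. Qed.

Lemma M_neq0a a b c d : a != 0 -> M a b c d != 0.
Proof. by apply: contra => /eqP; rewrite zeroM => /M_inj [-> _ _ _]. Qed.

Lemma refl0_R : is_reflection (refl 0 false).
Proof.
rewrite /is_reflection eig_rank /= /sg subM1; simpC.
apply/and3P; split.
  by rewrite /inG422 !M00 !M01 !M10 !M11 /unit4 mul1r !eqxx !orbT.
- by apply: M_neq0; rewrite -opprD oppr_eq0 -mulr2n pnatr_eq0.
- apply: (@notunit_of _ (M 0 1 0 0)); last by apply: M_neq0'; rewrite oner_eq0.
  by rewrite mulM zeroM; simpC.
Qed.

Lemma refl1_R : is_reflection (refl 1 false).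
Proof.
rewrite /is_reflection eig_rank /= /sg subM1; simpC.
apply/and3P; split.
- by rewrite /inG422 !M00 !M01 !M10 !M11 /unit4 mul1r !eqxx !orbT.
- by apply: M_neq0; rewrite oppr_eq0 oner_eq0.
- apply: (@notunit_of _ (M 1 0 1 0)); last by apply: M_neq0a; rewrite oner_eq0.
  by rewrite mulM zeroM; simpC; rewrite ?addNr ?subrr.
Qed.

Definition cj (a b : 'M[algC]_2) := b^-1 * a * b.

Lemma reach_trans s t u : hurwitz_reach s t -> hurwitz_reach t u -> hurwitz_reach s u.
Proof. move=> H1; elim=> // t' i _ IH hi; exact: hr_step. Qed.

Lemma hm_cat p a b q : hurwitz_move (size p) (p ++ a :: b :: q) = p ++ b :: cj a b :: q.
Proof.
rewrite /hurwitz_move take_size_cat // !nth_cat ltnn ltnNge leqnSn /= subnn subSnn /=.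
rewrite drop_cat ltnNge (leq_trans (leqnSn _) (leqnSn _)) /=.
by rewrite !subSn ?leqnSn // subnn /= drop0. Qed.
Lemma move_right q p a : hurwitz_reach (p ++ a :: q) (p ++ q ++ [:: foldl cj a q]).
Proof.
elim: q p a => [|b q IH] p a /=; first exact: hr_refl.
have := IH (rcons p b) (cj a b); rewrite !cat_rcons => H; apply: reach_trans H.
rewrite -hm_cat; apply: hr_step; first exact: hr_refl.
by rewrite size_cat /= !addnS ltnS ltnS leq_addr.
Qed.

Lemma refl_inv c e : (c < 3)%N -> (refl c e)^-1 = refl c e.
Proof.
move=> hc; have u : refl c e \is a GRing.unit by apply/unitrP; exists (refl c e); rewrite refl_sq.
by apply: (mulrI u); rewrite mulrV // refl_sq.
Qed.

Lemma cj_refl c e c' e' : (c < 3)%N -> (c' < 3)%N ->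
  cj (refl c e) (refl c' e') = if c == c' then refl c e else refl c (~~ e).
Proof. by move=> hc hc'; rewrite /cj refl_inv // refl_conj. Qed.

Definition isR (A : 'M[algC]_2) := exists c e, (c < 3)%N /\ A = refl c e.

Lemma fold_refl q c e : (c < 3)%N -> (forall A, A \in q -> isR A) ->
  exists e', foldl cj (refl c e) q = refl c e'.
Proof.
elim: q e => [|b q IH] e hc hq /=; first by exists e.
have [c' [e' [hc' ->]]] := hq b (mem_head _ _).
rewrite cj_refl //; case: (c == c'); apply: IH => // A hA; apply: hq; by rewrite in_cons hA orbT.
Qed.

Lemma refl_eq_cls c e c' e' : (c < 3)%N -> (c' < 3)%N -> refl c e = refl c' e' -> c = c'.
Proof. move=> hc hc' h; apply: cls_inj => //; by rewrite -(cls_refl e hc) -(cls_refl e' hc') h. Qed.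

Lemma split_mem (s : seq 'M[algC]_2) y : y \in s -> exists p1 p2, s = p1 ++ y :: p2.
Proof. by case/splitPr => p1 p2; exists p1, p2. Qed.

Theorem proposition3p8 (T : seq 'M[algC]_2) :
  all is_reflection T -> (3 <= size T)%N ->
  (forall s : 'M[algC]_2, is_reflection s ->
     exists2 r, r \in T & conjG422 r s) ->
  forall x : 'M[algC]_2, is_reflection x ->
  exists T0 : seq 'M[algC]_2, hurwitz_reach T (rcons T0 x).
Proof.
move=> Hall _ Hcov x Hx.
have HT : forall A, A \in T -> isR A by move=> A /(allP Hall) /refl_isR.
have [cx [ex [hcx xE]]] := refl_isR Hx.
have [r rT cr] := Hcov x Hx.
have [cr' [er [hcr rE]]] := HT r rT.
have ecr : cr' = cx by move: cr; rewrite rE xE; exact: conj_cls.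
subst cr'.
pose c0 := if cx == 0%N then 1%N else 0%N.
have hc0 : (c0 < 3)%N by rewrite /c0; case: ifP.
have c0x : c0 != cx by rewrite /c0; case: ifP => /eqP h //; rewrite ?h // eq_sym; apply/eqP.
have Rs0 : is_reflection (refl c0 false).
  by rewrite /c0; case: ifP => _; [exact: refl1_R | exact: refl0_R].
have [y yT cy] := Hcov _ Rs0.
have [cy' [ey [hcy yE]]] := HT y yT.
have ecy : cy' = c0 by move: cy; rewrite yE; exact: conj_cls.
subst cy'.
case/splitPr: rT yT HT => p q yT HT.
have Hpq : forall A, A \in p ++ q -> isR A.
  by move=> A; rewrite mem_cat => /orP [h|h]; apply: HT; rewrite mem_cat in_cons h ?orbT.
have [e1 fE] : exists e1, foldl cj (refl cx er) q = refl cx e1.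
  by apply: fold_refl => // A hA; apply: Hpq; rewrite mem_cat hA orbT.
have step1 := move_right q p r.
rewrite {2}rE fE in step1.
case: (eqVneq e1 ex) => [He|He].
  by exists (p ++ q); rewrite -cats1 -catA xE -He.
have yin : y \in p ++ q.
  move: yT; rewrite !mem_cat => /orP [->//|]; rewrite in_cons => /orP [/eqP h|->]; last by rewrite orbT.
  have := @refl_eq_cls c0 ey cx er hc0 hcx; rewrite -yE -rE h => /(_ erefl) h'.
  by rewrite h' eqxx in c0x.
have [p1 [p2 E]] := split_mem yin.
rewrite catA E -catA /= in step1.
have Hq2 : forall A, A \in p2 ++ [:: refl cx e1] -> isR A.
  move=> A; rewrite mem_cat => /orP [h|]; last by rewrite inE => /eqP ->; exists cx, e1.
  by apply: Hpq; rewrite E mem_cat in_cons h !orbT.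
have [e2 gE] := fold_refl ey hc0 Hq2.
have step2 := move_right (p2 ++ [:: refl cx e1]) p1 y.
rewrite yE gE in step2; rewrite yE in step1.
exists (p1 ++ p2 ++ [:: refl c0 e2]).
apply: reach_trans (reach_trans step1 step2) _.
have -> : p1 ++ (p2 ++ [:: refl cx e1]) ++ [:: refl c0 e2] = (p1 ++ p2) ++ [:: refl cx e1; refl c0 e2].
  by rewrite -!catA.
have -> : rcons (p1 ++ p2 ++ [:: refl c0 e2]) x = (p1 ++ p2) ++ [:: refl c0 e2; cj (refl cx e1) (refl c0 e2)].
  rewrite cj_refl // eq_sym (negbTE c0x) xE -cats1 -!catA /=.
  have -> : ex = ~~ e1 by move: He; clear; case: e1; case: ex.
  by [].
rewrite -hm_cat; apply: hr_step; first exact: hr_refl.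
by rewrite size_cat /= !addnS ltnS ltnS leq_addr.
Qed.
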